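(* Let $G$ be a finitely generated discrete group (considered as a zero-dimensional Stein group). Then for every continuous seminorm $q:\mathcal O_{\exp}(G)\to\mathbb R_+$ and every semicharacter $f:G\to[1,+\infty)$ one has $\sum_{x\in G}f(x)\,q(1_x)<\infty$.
   Context: For discrete $G$ every function is holomorphic. A semicharacter is a function $f:G\to[1,\infty)$ with $f(xy)\le f(x)f(y)$. $\mathcal O_{\exp}(G)$ is the set of functions $u:G\to\mathbb C$ with $|u|\le f$ for some semicharacter $f$; for each semicharacter $f$, $f^{\blacksquare}=\{u:|u|\le f\}$ is compact in the topology of pointwise convergence, $\mathbb Cf^{\blacksquare}=\bigcup_\lambda\lambda f^{\blacksquare}$ gets the topology in which a set is closed iff it meets every $\lambda f^{\blacksquare}$ in a pointwise-closed set, and $\mathcal O_{\exp}(G)$ carries the locally convex inductive limit topology of these spaces. $1_x$ denotes the characteristic function of $\{x\}$. *)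

(* Defs.v *)
From Stdlib Require Import Reals List ClassicalEpsilon.
From Coquelicot Require Import Coquelicot.
Import ListNotations.
Open Scope R_scope.

Record Group := {
  carrier :> Type;
  gmul : carrier -> carrier -> carrier;
  gone : carrier;
  ginv : carrier -> carrier;
  gmul_assoc : forall x y z, gmul x (gmul y z) = gmul (gmul x y) z;
  gmul_1l : forall x, gmul gone x = x;
  gmul_Vl : forall x, gmul (ginv x) x = gone
}.

Definition finitely_generated (G : Group) : Prop :=
  exists gens : list (carrier G), forall x : G,
    exists w : list (bool * carrier G),
      (forall p : bool * carrier G, In p w -> In (snd p) gens) /\
      x = fold_right (fun (p : bool * carrier G) (acc : carrier G) => gmul G (if fst p then snd p else ginv G (snd p)) acc)
                     (gone G) w.

Definition semicharacter (G : Group) (f : G -> R) : Prop :=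
  (forall x, 1 <= f x) /\ (forall x y, f (gmul G x y) <= f x * f y).

(* the set  r f^{box} = { u : |u| <= r f }  (for r >= 0 this is lambda f^box, |lambda| = r) *)
Definition box (G : Group) (f : G -> R) (r : R) (u : G -> C) : Prop :=
  forall x, Cmod (u x) <= r * f x.

Definition Oexp (G : Group) (u : G -> C) : Prop :=
  exists f, semicharacter G f /\ box G f 1 u.

Definition indic (G : Group) (x : G) : G -> C :=
  fun y => if excluded_middle_informative (y = x) then RtoC 1 else RtoC 0.

Definition seminorm_Oexp (G : Group) (q : (G -> C) -> R) : Prop :=
  (forall u, Oexp G u -> 0 <= q u) /\
  (forall u v, Oexp G u -> Oexp G v -> q (fun x => Cplus (u x) (v x)) <= q u + q v) /\
  (forall (c : C) u, Oexp G u -> q (fun x => Cmult c (u x)) = Cmod c * q u).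

(* Continuity of q restricted to the box r f^{box}, for the topology of
   pointwise convergence (product topology on C^G), written out with the
   standard basic neighbourhoods (finitely many coordinates). *)
Definition pointwise_continuous_on (G : Group) (K : (G -> C) -> Prop)
    (q : (G -> C) -> R) : Prop :=
  forall u, K u -> forall eps, 0 < eps ->
    exists (F : list G) (delta : R), 0 < delta /\
      forall v, K v -> (forall x, In x F -> Cmod (Cminus (v x) (u x)) < delta) ->
        Rabs (q v - q u) < eps.

(* A seminorm q on O_exp(G) is continuous for the locally convex inductive
   limit topology iff for every semicharacter f, its restriction to C f^{box}
   is continuous, i.e. (by definition of the topology on C f^{box}) iff its
   restriction to every lambda f^{box} is continuous for pointwise convergence. *)
Definition continuous_seminorm_Oexp (G : Group) (q : (G -> C) -> R) : Prop :=
  seminorm_Oexp G q /\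
  forall f, semicharacter G f -> forall r, 0 <= r ->
    pointwise_continuous_on G (box G f r) q.

Definition lsum {A : Type} (g : A -> R) (l : list A) : R :=
  fold_right (fun a s => g a + s) 0 l.

(* Main.v *)
Require Import Defs.
From Stdlib Require Import Reals List.
From Coquelicot Require Import Coquelicot.
From Stdlib Require Import Arith Lia Lra Wf_nat FunctionalExtensionality Classical ClassicalEpsilon.
Open Scope R_scope.

Fixpoint decf (m f n : nat) : list nat :=
  match f with
  | O => nil
  | S f' => match n with
            | O => nil
            | S n' => (n' mod m)%nat :: decf m f' (n' / m)%nat
            end
  end.
Definition dec (m n : nat) := decf m n n.
Fixpoint enc (m : nat) (w : list nat) : nat :=
  match w with nil => O | r :: w' => S (r + m * enc m w')%nat end.

Lemma enc_decf m (hm : (1 <= m)%nat) : forall f n, (n <= f)%nat -> enc m (decf m f n) = n.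
Proof.
  induction f as [|f IH]; intros n hn; simpl.
  - lia.
  - destruct n as [|n']; simpl; [reflexivity|].
    rewrite IH.
    + pose proof (Nat.div_mod_eq n' m). lia.
    + apply Nat.Div0.div_le_upper_bound. nia.
Qed.

Lemma decf_enc m (hm : (1 <= m)%nat) : forall w f, (forall r, In r w -> (r < m)%nat) ->
  (enc m w <= f)%nat -> decf m f (enc m w) = w.
Proof.
  induction w as [|r w IH]; intros f hw hf; simpl.
  - destruct f; reflexivity.
  - destruct f as [|f]; simpl in hf; [lia|]. simpl.
    assert (E1 : ((r + m * enc m w) mod m = r)%nat).
    { rewrite (Nat.mul_comm m). rewrite Nat.Div0.mod_add. apply Nat.mod_small. apply hw; simpl; auto. }
    assert (E2 : ((r + m * enc m w) / m = enc m w)%nat).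
    { rewrite (Nat.mul_comm m). rewrite Nat.div_add by lia. rewrite Nat.div_small. lia. apply hw; simpl; auto. }
    rewrite E1, E2. f_equal. apply IH.
    + intros; apply hw; simpl; auto.
    + nia.
Qed.

Lemma decf_digits m (hm : (1 <= m)%nat) : forall f n r, In r (decf m f n) -> (r < m)%nat.
Proof.
  induction f as [|f IH]; intros n r H; simpl in H; [contradiction|].
  destruct n; simpl in H; [contradiction|].
  destruct H as [H|H]; [subst; apply Nat.mod_upper_bound; lia | eauto].
Qed.

Lemma enc_app m : forall w1 w2, enc m (w1 ++ w2) = (enc m w1 + m ^ (length w1) * enc m w2)%nat.
Proof.
  induction w1 as [|r w1 IH]; intros w2; simpl. lia.
  rewrite IH. ring.
Qed.

Lemma pow_len m : forall w, (m ^ (length w) <= m * enc m w + 1)%nat.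
Proof.
  induction w as [|r w IH]; simpl. lia. nia.
Qed.

Lemma enc_app_bound m w1 w2 :
  (enc m (w1 ++ w2) + 1 <= (m + 1) * (enc m w1 + 1) * (enc m w2 + 1))%nat.
Proof.
  rewrite enc_app. pose proof (pow_len m w1).
  pose proof (Nat.mul_le_mono_r _ _ (enc m w2) H). nia.
Qed.

Lemma lsum_app {A} (g : A -> R) l1 l2 : lsum g (l1 ++ l2) = lsum g l1 + lsum g l2.
Proof. induction l1; simpl; [ring| rewrite IHl1; ring]. Qed.

Lemma lsum_le {A} (g1 g2 : A -> R) l : (forall x, g1 x <= g2 x) -> lsum g1 l <= lsum g2 l.
Proof. intros H; induction l; simpl; [lra| specialize (H a); lra]. Qed.

Lemma lsum_scal {A} (g : A -> R) c l : lsum (fun x => c * g x) l = c * lsum g l.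
Proof. induction l; simpl; [ring| rewrite IHl; ring]. Qed.

Lemma lsum_map {A B} (g : B -> R) (c : A -> B) l : lsum (fun x => g (c x)) l = lsum g (map c l).
Proof. induction l; simpl; [reflexivity| rewrite IHl; reflexivity]. Qed.

Lemma lsum_nonneg_elem {A} (g : A -> R) l x : (forall y, 0 <= g y) -> In x l -> g x <= lsum g l.
Proof.
  intros H; induction l; simpl; intros Hi; [contradiction|].
  destruct Hi as [<-|Hi].
  - pose proof (H a). assert (0 <= lsum g l) by (clear IHl; induction l; simpl; [lra| pose proof (H a0); lra]). lra.
  - pose proof (H a). pose proof (IHl Hi). lra.
Qed.

Definition phi (n : nat) : R := / (INR (n + 1) * INR (n + 2)).

Lemma phi_pos n : 0 <= phi n.
Proof. unfold phi. apply Rlt_le, Rinv_0_lt_compat. apply Rmult_lt_0_compat; apply lt_0_INR; lia. Qed.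

Lemma sum_phi : forall N L, NoDup L -> (forall n, In n L -> (n < N)%nat) ->
  lsum phi L <= 1 - / INR (N + 1).
Proof.
  induction N as [|N IH]; intros L HL Hb.
  - destruct L as [|a L]. simpl. replace (INR (0+1)) with 1 by (simpl; ring). lra.
    specialize (Hb a (or_introl eq_refl)). lia.
  - assert (Hstep : phi N + (1 - / INR (N + 1)) = 1 - / INR (S N + 1)).
    { unfold phi. rewrite !plus_INR, !S_INR. simpl.
      pose proof (pos_INR N). field. split; lra. }
    assert (Hmono : 1 - / INR (N + 1) <= 1 - / INR (S N + 1)).
    { pose proof (phi_pos N). lra. }
    destruct (in_dec Nat.eq_dec N L) as [Hi|Hi].
    + destruct (in_split _ _ Hi) as (l1 & l2 & ->).
      rewrite lsum_app. change (lsum phi (N :: l2)) with (phi N + lsum phi l2).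
      assert (lsum phi (l1 ++ l2) <= 1 - / INR (N + 1)).
      { apply IH. eapply NoDup_remove_1; eauto.
        intros n Hn. assert (Hne : n <> N). { intro; subst. eapply NoDup_remove_2; eauto. }
        assert (Hin : In n (l1 ++ N :: l2)). { apply in_app_or in Hn. apply in_or_app. simpl. tauto. }
        specialize (Hb n Hin). lia. }
      rewrite lsum_app in H. lra.
    + assert (lsum phi L <= 1 - / INR (N + 1)).
      { apply IH; auto. intros n Hn. specialize (Hb n Hn). assert (n <> N) by (intro; subst; tauto). lia. }
      lra.
Qed.

Lemma sum_phi1 L : NoDup L -> lsum phi L <= 1.
Proof.
  intros HL. assert (H := sum_phi (S (list_max L)) L HL).
  assert (lsum phi L <= 1 - / INR (S (list_max L) + 1)).
  { apply H. intros n Hn. assert (n <= list_max L)%nat.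
    { pose proof (proj1 (list_max_le L (list_max L)) (le_n _)). rewrite Forall_forall in H0. auto. }
    lia. }
  assert (0 < / INR (S (list_max L) + 1)) by (apply Rinv_0_lt_compat, lt_0_INR; lia). lra.
Qed.

Definition letter (G : Group) (gens : list G) (r : nat) : G :=
  if (r <? length gens)%nat then nth r gens (gone G)
  else ginv G (nth (r - length gens) gens (gone G)).
Definition weval (G : Group) (gens : list G) (w : list nat) : G :=
  fold_right (fun r acc => gmul G (letter G gens r) acc) (gone G) w.

Lemma weval_app G gens w1 w2 :
  weval G gens (w1 ++ w2) = gmul G (weval G gens w1) (weval G gens w2).
Proof.
  induction w1 as [|r w1 IH]; simpl.
  - rewrite gmul_1l. reflexivity.
  - rewrite IH, gmul_assoc. reflexivity.
Qed.

Lemma words_exist G gens : forall w : list (bool * carrier G),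
  (forall p, In p w -> In (snd p) gens) ->
  exists w' : list nat, (forall r, In r w' -> (r < 2 * length gens)%nat) /\ weval G gens w' =
    fold_right (fun (p : bool * carrier G) (acc : carrier G) =>
      gmul G (if fst p then snd p else ginv G (snd p)) acc) (gone G) w.
Proof.
  induction w as [|p w IH]; intros Hw.
  - exists nil. split; [simpl; tauto| reflexivity].
  - destruct IH as [w' [Hd Hw']].
    { intros; apply Hw; simpl; auto. }
    destruct (In_nth gens (snd p) (gone G) (Hw p (or_introl eq_refl))) as (i & Hi & Hn).
    exists ((if fst p then i else length gens + i)%nat :: w'). split.
    { intros r [<-|Hr]; [destruct (fst p); lia| auto]. }
    simpl. rewrite Hw'. f_equal.
    unfold letter. destruct (fst p).
    + replace (i <? length gens)%nat with true by (symmetry; apply Nat.ltb_lt; lia). auto.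
    + replace (length gens + i <? length gens)%nat with false by (symmetry; apply Nat.ltb_ge; lia).
      replace (length gens + i - length gens)%nat with i by lia. rewrite Hn. reflexivity.
Qed.

Lemma code_exists (G : Group) (hG : finitely_generated G) :
  exists (m : nat) (c : G -> nat), (1 <= m)%nat /\
    (forall x y, c x = c y -> x = y) /\
    (forall x y, (c (gmul G x y) + 1 <= (m + 1) * (c x + 1) * (c y + 1))%nat).
Proof.
  destruct hG as [gens Hgens].
  set (m := (2 * length gens + 1)%nat).
  assert (hm : (1 <= m)%nat) by (unfold m; lia).
  assert (E : forall x, exists n, weval G gens (dec m n) = x /\
             forall n', weval G gens (dec m n') = x -> (n <= n')%nat).
  { intros x.
    assert (Hex : exists n, weval G gens (dec m n) = x).
    { destruct (Hgens x) as [w [Hw ->]].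
      destruct (words_exist G gens w Hw) as [w' [Hd Hw']].
      exists (enc m w'). unfold dec. rewrite decf_enc; auto.
      intros r Hr; specialize (Hd r Hr); unfold m; lia. }
    destruct (dec_inh_nat_subset_has_unique_least_element
      (fun n => weval G gens (dec m n) = x) (fun n => classic _) Hex) as [n [[Hn1 Hn2] _]].
    exists n; split; auto. }
  exists m, (fun x => proj1_sig (constructive_indefinite_description _ (E x))).
  split; [exact hm|split].
  - intros x y Hxy.
    destruct (proj2_sig (constructive_indefinite_description _ (E x))) as [Hx _].
    destruct (proj2_sig (constructive_indefinite_description _ (E y))) as [Hy _].
    rewrite <- Hx, <- Hy, Hxy. reflexivity.
  - intros x y.
    destruct (proj2_sig (constructive_indefinite_description _ (E x))) as [Hx _].
    destruct (proj2_sig (constructive_indefinite_description _ (E y))) as [Hy _].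
    destruct (proj2_sig (constructive_indefinite_description _ (E (gmul G x y)))) as [_ Hz].
    set (nx := proj1_sig (constructive_indefinite_description _ (E x))) in *.
    set (ny := proj1_sig (constructive_indefinite_description _ (E y))) in *.
    set (nz := proj1_sig (constructive_indefinite_description _ (E (gmul G x y)))) in *.
    set (w := (dec m nx ++ dec m ny)).
    assert (Hd : decf m (enc m w) (enc m w) = w).
    { apply decf_enc; auto. intros r Hr. unfold w in Hr. apply in_app_or in Hr.
      destruct Hr as [Hr|Hr]; eapply decf_digits; eauto. }
    assert (Hle : (nz <= enc m w)%nat).
    { apply Hz. unfold dec. rewrite Hd. unfold w. rewrite weval_app, Hx, Hy. reflexivity. }
    pose proof (enc_app_bound m (dec m nx) (dec m ny)).
    assert (E1 : enc m (dec m nx) = nx) by (apply enc_decf; auto).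
    assert (E2 : enc m (dec m ny) = ny) by (apply enc_decf; auto).
    rewrite E1, E2 in H. fold w in H. lia.
Qed.

Lemma NoDup_map_inj {A B} (c : A -> B) (Hc : forall x y, c x = c y -> x = y) l :
  NoDup l -> NoDup (map c l).
Proof.
  induction 1; simpl; constructor; auto.
  intros Hin. apply in_map_iff in Hin. destruct Hin as [y [Hy Hy']].
  apply Hc in Hy. subst. contradiction.
Qed.

Theorem mainTheorem12 (G : Group) (hG : finitely_generated G)
    (q : (G -> C) -> R) (hq : continuous_seminorm_Oexp G q)
    (f : G -> R) (hf : semicharacter G f) :
  exists B : R, forall l : list G, NoDup l ->
    lsum (fun x => f x * q (indic G x)) l <= B.
Proof.
  destruct (code_exists G hG) as (m & c & hm & cinj & cbound).
  set (M := INR (m + 1)).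
  assert (HM : 2 <= M).
  { unfold M. replace 2 with (INR 2) by (simpl; ring). apply le_INR. lia. }
  assert (Ha : forall x, 1 <= INR (c x + 1)).
  { intros x. replace 1 with (INR 1) by reflexivity. apply le_INR. lia. }
  set (h := fun x => (M * INR (c x + 1)) ^ 2).
  assert (hge1 : forall x, 1 <= h x).
  { intros x. unfold h. specialize (Ha x).
    assert (1 <= M * INR (c x + 1)) by nra. simpl. nra. }
  assert (hsub : forall x y, h (gmul G x y) <= h x * h y).
  { intros x y. unfold h.
    assert (H1 : INR (c (gmul G x y) + 1) <= M * INR (c x + 1) * INR (c y + 1)).
    { unfold M. rewrite <- !mult_INR. apply le_INR.
      specialize (cbound x y). lia. }
    pose proof (Ha x). pose proof (Ha y). pose proof (Ha (gmul G x y)).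
    assert (H2' : 0 <= M * INR (c (gmul G x y) + 1)) by nra.
    assert (H3' : M * INR (c (gmul G x y) + 1) <= (M * INR (c x + 1)) * (M * INR (c y + 1))) by nra.
    nra. }
  assert (hphi : forall x, / h x <= phi (c x)).
  { intros x. unfold phi, h. apply Rinv_le_contravar.
    - apply Rmult_lt_0_compat; apply lt_0_INR; lia.
    - replace (c x + 2)%nat with (c x + 1 + 1)%nat by lia. rewrite (plus_INR (c x + 1) 1).
      pose proof (Ha x). simpl (INR 1). set (b := INR (c x + 1)) in *.
      assert (4 <= M * M) by nra. simpl. 
      assert (b * (b + 1) <= 4 * (b * b)) by nra.
      assert (4 * (b * b) <= (M * M) * (b * b)) by (apply Rmult_le_compat_r; nra).
      nra. }
  set (g := fun x => f x * h x).
  assert (hg : semicharacter G g).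
  { destruct hf as [hf1 hf2]. split.
    - intros x. unfold g. specialize (hf1 x). specialize (hge1 x). nra.
    - intros x y. unfold g.
      pose proof (hf2 x y). pose proof (hsub x y).
      pose proof (hf1 x). pose proof (hf1 y). pose proof (hf1 (gmul G x y)).
      pose proof (hge1 x). pose proof (hge1 y). pose proof (hge1 (gmul G x y)).
      assert (f (gmul G x y) * h (gmul G x y) <= (f x * f y) * (h x * h y)).
      { apply Rmult_le_compat; lra. }
      nra. }
  destruct hq as [[hposq [haddq hhomq]] hcont].
  set (zero := fun _ : G => RtoC 0).
  assert (one_sc : semicharacter G (fun _ => 1)).
  { split; intros; lra. }
  assert (Oexp0 : Oexp G zero).
  { exists (fun _ => 1). split; auto. intros x. unfold zero. rewrite Cmod_0. lra. }
  assert (Oexp1 : forall x, Oexp G (indic G x)).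
  { intros x. exists (fun _ => 1). split; auto. intros y. unfold indic.
    destruct (excluded_middle_informative (y = x)); rewrite Cmod_R;
      [rewrite Rabs_R1| rewrite Rabs_R0]; lra. }
  assert (q0 : q zero = 0).
  { pose proof (hhomq (RtoC 0) zero Oexp0) as H.
    rewrite Cmod_0, Rmult_0_l in H.
    replace (fun x => Cmult (RtoC 0) (zero x)) with zero in H; auto.
    apply functional_extensionality. intros x. unfold zero.
    unfold Cmult, RtoC. simpl. f_equal; ring. }
  assert (box0 : box G g 1 zero).
  { intros x. unfold zero. rewrite Cmod_0. destruct hg as [hg1 _]. specialize (hg1 x). lra. }
  destruct (hcont g hg 1 Rle_0_1 zero box0 1 Rlt_0_1) as (F & delta & hd & Hv).
  set (a := fun x => f x * q (indic G x)).
  set (Cst := 1 + lsum (fun y => Rabs (a y * h y)) F).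
  assert (HC : forall x, a x * h x <= Cst).
  { intros x. destruct (classic (In x F)) as [Hin|Hnin].
    - unfold Cst.
      pose proof (lsum_nonneg_elem (fun y => Rabs (a y * h y)) F x (fun y => Rabs_pos _) Hin).
      simpl in H. pose proof (Rle_abs (a x * h x)). lra.
    - set (v := fun y => Cmult (RtoC (g x)) (indic G x y)).
      assert (Hbox : box G g 1 v).
      { intros y. unfold v. rewrite Cmod_mult, !Cmod_R.
        destruct hg as [hg1 _].
        rewrite Rabs_pos_eq by (specialize (hg1 x); lra).
        unfold indic. destruct (excluded_middle_informative (y = x)).
        - subst. rewrite Cmod_R, Rabs_R1. lra.
        - rewrite Cmod_R, Rabs_R0. specialize (hg1 y). lra. }
      assert (Hnear : forall y, In y F -> Cmod (Cminus (v y) (zero y)) < delta).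
      { intros y Hy. unfold v, zero, indic.
        destruct (excluded_middle_informative (y = x)).
        - subst. contradiction.
        - replace (Cminus (Cmult (RtoC (g x)) (RtoC 0)) (RtoC 0)) with (RtoC 0).
          + rewrite Cmod_0. exact hd.
          + unfold Cminus, Cplus, Copp, Cmult, RtoC. simpl. f_equal; ring. }
      pose proof (Hv v Hbox Hnear) as Hq.
      rewrite q0, Rminus_0_r in Hq.
      unfold v in Hq. rewrite (hhomq (RtoC (g x)) (indic G x) (Oexp1 x)) in Hq.
      rewrite Cmod_R in Hq.
      destruct hg as [hg1 _].
      pose proof (hposq _ (Oexp1 x)).
      rewrite (Rabs_pos_eq (g x)) in Hq by (specialize (hg1 x); lra).
      rewrite Rabs_pos_eq in Hq by (specialize (hg1 x); nra).
      unfold Cst, a. unfold g in Hq.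
      assert (0 <= lsum (fun y => Rabs (a y * h y)) F).
      { clear. induction F; simpl; [lra| pose proof (Rabs_pos (a a0 * h a0)); lra]. }
      unfold a in H0. replace (f x * q (indic G x) * h x) with (f x * h x * q (indic G x)) by ring. lra. }
  exists Cst. intros l Hl.
  assert (HC0 : 0 <= Cst).
  { unfold Cst. assert (0 <= lsum (fun y => Rabs (a y * h y)) F).
    { clear. induction F; simpl; [lra| pose proof (Rabs_pos (a a0 * h a0)); lra]. }
    lra. }
  apply Rle_trans with (lsum (fun x => Cst * phi (c x)) l).
  - apply lsum_le. intros x. fold (a x).
    pose proof (HC x). pose proof (hphi x). pose proof (hge1 x).
    apply Rle_trans with (Cst * / h x).
    + apply (Rmult_le_reg_r (h x)); [lra|].
      rewrite Rmult_assoc, Rinv_l by lra. lra.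
    + apply Rmult_le_compat_l; auto.
  - rewrite lsum_scal. rewrite (lsum_map phi c l).
    pose proof (sum_phi1 (map c l) (NoDup_map_inj c cinj l Hl)). nra.
Qed.
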